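(* Let $k\ge 4$ be an integer, let $t$ be a positive integer divisible by $\operatorname{lcm}(2,3,\ldots,2k-1)$, and let $n$ be an integer with $k^2-k \le n \le 4k^2-10k+5$. Suppose $S$ is a $k$-bounded zero-sum sequence of length $|S|=t+n$ that is $t$-avoiding, and let $\alpha>0$, $\beta>0$ be integers with $v_\alpha(S)\ge \frac{k}{k+1}n$ and $v_{-\beta}(S)\ge\frac{k}{k+1}n$. Let $g=\gcd(\alpha,\beta)$ and let $X$ be the sequence consisting of $\beta/g$ copies of $\alpha$ and $\alpha/g$ copies of $-\beta$. Then for every $N\in\mathbb N$, the sequence $S'$ obtained by adjoining $N$ copies of $X$ to $S$ (i.e. $S\cdot X^{[N]}$) has no zero-sum subsequence of length exactly $n$.
   Context: A sequence is a finite multiset of integers; $|S|$ is its length counted with multiplicity, $v_a(S)$ is the multiplicity of $a$ in $S$, and a subsequence is a sub-multiset. $S$ is zero-sum if the sum of its terms is $0$, and $k$-bounded if all terms lie in $[-k,k]$. A zero-sum sequence is $t$-avoiding if it has no zero-sum subsequence of length exactly $t$. $S\cdot X^{[N]}$ denotes the concatenation (multiset union) of $S$ with $N$ copies of $X$. *)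

(* Defs.v *)
From mathcomp Require Import all_boot all_order all_algebra.
Set Implicit Arguments. Unset Strict Implicit. Unset Printing Implicit Defensive.
Import Order.TTheory GRing.Theory Num.Theory.
Local Open Scope ring_scope.

(* A sequence (finite multiset of integers) is represented by a list
   [S : seq int]; order is irrelevant for all notions below.
   A subsequence (sub-multiset) of S is [mask m S] for a bitmask m. *)

Definition seqsum (S : seq int) : int := \sum_(x <- S) x.

Definition zero_sum (S : seq int) : Prop := seqsum S = 0.

Definition kbounded (k : nat) (S : seq int) : Prop :=
  forall x, x \in S -> - (k%:Z) <= x <= k%:Z.

Definition has_zs_sub_len (t : nat) (S : seq int) : Prop :=
  exists m : bitseq, size (mask m S) = t /\ zero_sum (mask m S).

Definition t_avoiding (t : nat) (S : seq int) : Prop :=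
  zero_sum S /\ ~ has_zs_sub_len t S.

Definition mult (a : int) (S : seq int) : nat := count_mem a S.

Definition lcm_upto (m : nat) : nat := \big[lcmn/1%N]_(2 <= i < m.+1) i.

Definition adjoin (S X : seq int) (N : nat) : seq int :=
  S ++ flatten (nseq N X).

(* Main.v *)
Require Import Defs.
From mathcomp Require Import all_boot all_order all_algebra.
From mathcomp Require Import zify ring lra.
Import Order.TTheory GRing.Theory Num.Theory.
Local Open Scope ring_scope.

Lemma lowb {k a : int} {T : seq int} :
  (forall x, x \in T -> - k <= x) -> - k <= a ->
  (count_mem a T)%:Z * (a + k) <= seqsum T + k * (size T)%:Z.
Proof.
move=> hT ha; elim: T hT => [|y T IH] hT; first by rewrite /seqsum big_nil /= !mul0r ?mulr0 ?addr0 ?subr0.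
rewrite /seqsum big_cons -/(seqsum T) /=.
have hy : - k <= y by apply: hT; rewrite inE eqxx.
have := IH (fun x hx => hT x ltac:(by rewrite inE hx orbT)).
case: eqP => [->|_] /= h; lia.
Qed.

Lemma uppb {k a : int} {T : seq int} :
  (forall x, x \in T -> x <= k) -> a <= k ->
  (count_mem a T)%:Z * (k - a) <= k * (size T)%:Z - seqsum T.
Proof.
move=> hT ha; elim: T hT => [|y T IH] hT; first by rewrite /seqsum big_nil /= !mul0r ?mulr0 ?addr0 ?subr0.
rewrite /seqsum big_cons -/(seqsum T) /=.
have hy : y <= k by apply: hT; rewrite inE eqxx.
have := IH (fun x hx => hT x ltac:(by rewrite inE hx orbT)).
case: eqP => [->|_] /= h; lia.
Qed.

Lemma subms (S T : seq int) :
  (forall x, (count_mem x T <= count_mem x S)%N) ->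
  exists m : bitseq, perm_eq S (T ++ mask m S).
Proof.
elim: S T => [|y S IH] T hc.
  exists [::]; case: T hc => [|z T] hc //.
  by have := hc z; rewrite /= eqxx.
case hyT: (y \in T).
  have hp := perm_to_rem hyT.
  have [m hm] : exists m, perm_eq S (rem y T ++ mask m S).
    apply: IH => x; have := hc x; move/permP: hp => /(_ (pred1 x)) /= ->.
    by rewrite /=; case: (y == x); rewrite /= ?add1n ?ltnS.
  exists (false :: m); rewrite /=.
  apply/permP => p; move/permP: hm => /(_ p); move/permP: hp => /(_ p).
  by rewrite !count_cat /= => -> ->; rewrite addnA.
have [m hm] : exists m, perm_eq S (T ++ mask m S).
  apply: IH => x; have := hc x => /=.
  case: (eqVneq y x) => [<-|_]; last by rewrite add0n.
  by move/count_memPn: (negbT hyT) => ->.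
exists (true :: m); rewrite /=.
apply/permP => p; move/permP: hm => /(_ p).
by rewrite !count_cat /= => ->; lia.
Qed.

Theorem lemma2p3 (k t n : nat) (S : seq int) (alpha beta : nat) :
  (4 <= k)%N ->
  (0 < t)%N ->
  (lcm_upto (2 * k - 1) %| t)%N ->
  (k * k - k <= n)%N ->
  (n + 10 * k <= 4 * k * k + 5)%N ->
  kbounded k S ->
  size S = (t + n)%N ->
  t_avoiding t S ->
  (0 < alpha)%N -> (0 < beta)%N ->
  (k * n <= (k + 1) * mult (alpha%:Z) S)%N ->
  (k * n <= (k + 1) * mult (- (beta%:Z)) S)%N ->
  forall N : nat,
    let g := gcdn alpha beta in
    let X := nseq (beta %/ g) (alpha%:Z) ++ nseq (alpha %/ g) (- (beta%:Z)) in
    ~ has_zs_sub_len n (adjoin S X N).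
Proof.
move=> hk ht _ hn1 _ hb hS [hz hav] ha hbt hma hmb N g X [m [hsz hzs]].
set T := mask m (adjoin S X N) in hsz hzs.
have npos : (0 < n)%N by nia.
have memX : forall x, x \in flatten (nseq N X) -> x = alpha%:Z \/ x = - beta%:Z.
  move=> x /flattenP [s]; rewrite mem_nseq => /andP[_ /eqP ->].
  rewrite mem_cat !mem_nseq => /orP[/andP[_ /eqP]|/andP[_ /eqP]]; by auto.
have inA : alpha%:Z \in S.
  apply/negPn/negP => /count_memPn h; move: hma; rewrite /mult h; lia.
have inB : - beta%:Z \in S.
  apply/negPn/negP => /count_memPn h; move: hmb; rewrite /mult h; lia.
have bT : forall x, x \in T -> - k%:Z <= x <= k%:Z.
  move=> x /mem_mask; rewrite mem_cat => /orP[/hb //|/memX [->|->]].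
    by apply: hb.
  by apply: hb.
have bT1 : forall x, x \in T -> - k%:Z <= x by move=> x /bT /andP[].
have bT2 : forall x, x \in T -> x <= k%:Z by move=> x /bT /andP[].
have [hA1 hA2] := andP (hb _ inA).
have [hB1 hB2] := andP (hb _ inB).
have cA : (count_mem (alpha%:Z) T <= count_mem (alpha%:Z) S)%N.
  have := lowb bT1 hA1; rewrite (hzs : seqsum T = 0) add0r hsz.
  move: hma; rewrite /mult; set c := count_mem _ T; set d := count_mem _ S.
  move=> h1 h2.
  have h3 : (c * (k + 1) <= k * n)%N.
    have h4 : (c%:Z * (k%:Z + 1) <= c%:Z * (alpha%:Z + k%:Z)) by apply: ler_wpM2l; lia.
    lia.
  have : (c * (k + 1) <= d * (k + 1))%N by lia.
  by rewrite leq_pmul2r ?addn1.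
have cB : (count_mem (- beta%:Z) T <= count_mem (- beta%:Z) S)%N.
  have := uppb bT2 hB2; rewrite (hzs : seqsum T = 0) subr0 hsz.
  move: hmb; rewrite /mult; set c := count_mem _ T; set d := count_mem _ S.
  move=> h1 h2.
  have h3 : (c * (k + 1) <= k * n)%N.
    have h4 : (c%:Z * (k%:Z + 1) <= c%:Z * (k%:Z - - beta%:Z)) by apply: ler_wpM2l; lia.
    lia.
  have : (c * (k + 1) <= d * (k + 1))%N by lia.
  by rewrite leq_pmul2r ?addn1.
have cnt : forall x, (count_mem x T <= count_mem x S)%N.
  move=> x; case: (eqVneq x (alpha%:Z)) => [->//|nA].
  case: (eqVneq x (- beta%:Z)) => [->//|nB].
  apply: leq_trans (leq_count_subseq _ (mask_subseq m _)) _.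
  rewrite count_cat.
  have -> : count_mem x (flatten (nseq N X)) = 0%N.
    apply/count_memPn/negP => /memX [] /eqP; by apply/negP.
  by rewrite addn0.
have [m' hp] := subms _ _ cnt.
apply: hav; exists m'; split.
  have := perm_size hp; rewrite size_cat hS hsz => e; apply/eqP; rewrite -(eqn_add2l n); apply/eqP; rewrite -e; lia.
rewrite /zero_sum; have := hz; rewrite /zero_sum /seqsum (perm_big _ hp) big_cat /=.
by rewrite -/(seqsum T) hzs add0r.
Qed.
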